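(* The rule $R$ is a well-defined function $\Sigma^n\to\Sigma^n$: there is no $s\in\Sigma^n$ with $ICR_0(s)\in\mathrm{Reps}$, $ICR_1(s)\in\mathrm{Reps}$ and $ICR_0(s)\neq ICR_2(s)$ (in particular, if $k>2$ there is no $s$ with both $ICR_0(s),ICR_1(s)\in\mathrm{Reps}$).
   Context: Let $k\ge 2$, $\Sigma=\{0,\dots,k-1\}$ with arithmetic modulo $k$, $n\ge 1$, and $s=s[0]\cdots s[n-1]\in\Sigma^n$. For an integer $j$, $ICR_j(s)=s[1]\cdots s[n-1](s[0]+j)$; each $ICR_j$ is a bijection of $\Sigma^n$; $ICR=ICR_1$. Let $\mathbf N$ be the set of cycles (orbits) of the permutation $ICR_1$ of $\Sigma^n$; $orbit(s)$ is the cycle containing $s$. Let $\mathbf G$ be the directed graph on $\mathbf N$ with an arc $(\mathcal U,\mathcal V)$ iff some $s\in\mathcal U$ has $ICR_0(s)\in\mathcal V$. Let $\mathbf T$ be a directed spanning tree of $\mathbf G$ rooted at $\mathcal R\in\mathbf N$ (arcs from parent to child), with parent map $parent$ on $\mathbf N\setminus\{\mathcal R\}$; the depth of a cycle is its distance from the root (root has depth $0$). For each $\mathcal U\ne\mathcal R$, a representative $rep(\mathcal U)$ is a fixed node $s\in\mathcal U$ with $ICR_0^{-1}(s)\in parent(\mathcal U)$ and $s[n-1]\equiv \text{depth}(\mathcal U)\pmod k$ (such a node is assumed to exist and one is fixed). $\mathrm{Reps}$ is the set of all representatives. Define $R(s)=ICR_0(s)$ if $ICR_0(s)\in\mathrm{Reps}$;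 $R(s)=ICR_2(s)$ if $ICR_1(s)\in\mathrm{Reps}$; $R(s)=ICR_1(s)$ otherwise. *)

(* Defs.v *)
From mathcomp Require Import all_boot all_algebra.
Set Implicit Arguments. Unset Strict Implicit. Unset Printing Implicit Defensive.
Import GRing.Theory.
Local Open Scope ring_scope.

(* Words s = s[0]..s[n-1] over Sigma = Z/kZ (k >= 2 assumed in the theorem). *)
Definition word (k n : nat) := {ffun 'I_n -> 'Z_k}.

(* ICR_j(s) = s[1] ... s[n-1] (s[0] + j).  Position i < n-1 gets s[i+1];
   position n-1 gets s[0] + j.  (insubd i _ only supplies a default index.) *)
Definition icr (k n : nat) (j : 'Z_k) (s : word k n) : word k n :=
  [ffun i : 'I_n => if (i.+1 < n)%N then s (insubd i i.+1)
                    else s (insubd i 0%N) + j].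

Definition cycle_of (k n : nat) (s : word k n) : {set word k n} :=
  [set t | fconnect (icr 1) s t].

Definition cycles (k n : nat) : {set {set word k n}} :=
  [set cycle_of s | s : word k n].

Definition arcG (k n : nat) (U V : {set word k n}) : bool :=
  [exists s in U, icr 0 s \in V].

Definition spanning_tree (k n : nat) (Rt : {set word k n})
    (par : {set word k n} -> {set word k n}) : Prop :=
  Rt \in cycles k n /\
  (forall U, U \in cycles k n -> U != Rt ->
       par U \in cycles k n /\ arcG (par U) U) /\
  (forall U, U \in cycles k n -> exists m, iter m par U = Rt).

(* depth = distance to the root in the tree = least m with par^m(U) = Rt
   (searched below the bound #|{set word}|, which exceeds the number of
   cycles, hence any tree path length). *)
Definition depth (k n : nat) (Rt : {set word k n})
    (par : {set word k n} -> {set word k n}) (U : {set word k n}) : nat :=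
  find (fun m => iter m par U == Rt) (iota 0 #|{: {set word k n}}|).

Definition valid_reps (k n : nat) (Rt : {set word k n})
    (par : {set word k n} -> {set word k n})
    (rep : {set word k n} -> word k n) : Prop :=
  forall U, U \in cycles k n -> U != Rt ->
    [/\ rep U \in U,
        finv (icr 0) (rep U) \in par U &
        forall i : 'I_n, i.+1 = n -> rep U i = (depth Rt par U)%:R].

Definition Reps (k n : nat) (Rt : {set word k n})
    (rep : {set word k n} -> word k n) : {set word k n} :=
  [set rep U | U in cycles k n :\ Rt].

(* Main.v *)
Require Import Defs.
From mathcomp Require Import all_boot all_algebra.
From mathcomp Require Import zify.
Import GRing.Theory.
Local Open Scope ring_scope.

Lemma icr_last (k n : nat) (j : 'Z_k) (s : word k n) (i : 'I_n) :
  i.+1 = n -> icr j s i = s (insubd i 0%N) + j.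
Proof. by move=> hi; rewrite /icr ffunE hi ltnn. Qed.

Lemma icr_inj (k n : nat) (j : 'Z_k) : injective (@icr k n j).
Proof.
move=> s s' e; apply/ffunP => x.
have npos : (0 < n)%N by apply: leq_ltn_trans (ltn_ord x).
case: (posnP x) => [x0|xpos].
- have hl : (n.-1 < n)%N by rewrite prednK.
  have := congr1 (fun f : word k n => f (Ordinal hl)) e => /=.
  rewrite !icr_last /= ?prednK //.
  have -> : insubd (Ordinal hl) 0%N = x.
    by apply: val_inj; rewrite /= insubdK // x0.
  by move/addIr.
- have hl : (x.-1 < n)%N by apply: leq_ltn_trans (leq_pred _) (ltn_ord x).
  have := congr1 (fun f : word k n => f (Ordinal hl)) e => /=.
  rewrite /icr !ffunE /= prednK // ltn_ord.
  have -> : insubd (Ordinal hl) x = x.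
    by apply: val_inj; rewrite /= insubdK //; exact: (ltn_ord x).
  by [].
Qed.

Lemma cycle_ofE (k n : nat) (w t : word k n) :
  t \in cycle_of w -> cycle_of w = cycle_of t.
Proof.
rewrite inE => wt; apply/setP => u; rewrite !inE.
apply/idP/idP => h.
- apply: connect_trans h; by rewrite fconnect_sym //; apply: icr_inj.
- exact: connect_trans wt h.
Qed.

Section Iter.
Variables (T : finType) (f : T -> T) (r x : T) (m : nat).
Hypothesis hm : iter m f x = r.
Hypothesis hmin : forall m', iter m' f x = r -> (m <= m')%N.

Lemma m_small : (m < #|T|)%N.
Proof.
pose g (i : 'I_m.+1) := iter i f x.
have inj : injective g.
  suff H : forall i j : 'I_m.+1, (i < j)%N -> g i = g j -> False.
    move=> i j e; apply: val_inj; case: (ltngtP i j) => // h.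
    - by case: (H _ _ h e).
    - by case: (H _ _ h (esym e)).
  move=> i j ij e.
  have : iter ((m - j) + i) f x = r.
    by rewrite iterD -/(g i) e /g -iterD subnK // -ltnS.
  move/hmin; have := ltn_ord j; move: ij; clear.
  move: (nat_of_ord i) (nat_of_ord j) => a b; lia.
have := leq_card _ inj; by rewrite card_ord.
Qed.

Lemma findE : find (fun m => iter m f x == r) (iota 0 #|T|) = m.
Proof.
have hs := m_small.
rewrite -(subnKC (ltnW hs)) iotaD find_cat.
have -> : has (fun m => iter m f x == r) (iota 0 m) = false.
  apply/hasPn => i; rewrite mem_iota add0n /= => hi.
  apply/eqP => /hmin; by rewrite leqNgt hi.
rewrite size_iota add0n.
case E: (#|T| - m)%N => [|t]; first by move: hs E; clear; lia.
by rewrite /= hm eqxx addn0.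
Qed.
End Iter.

Lemma depth_min (k n : nat) (Rt : {set word k n}) par X :
  spanning_tree Rt par -> X \in cycles k n ->
  iter (depth Rt par X) par X = Rt /\
  forall m', iter m' par X = Rt -> (depth Rt par X <= m')%N.
Proof.
move=> [_ [_ H3]] /H3 ex.
have ex' : exists m, (fun m => iter m par X == Rt) m.
  by case: ex => m hm; exists m; apply/eqP.
case: (ex_minnP ex') => d /eqP hd hmin.
have hmin' : forall m', iter m' par X = Rt -> (d <= m')%N.
  by move=> m' /eqP; apply: hmin.
by rewrite /depth (findE _ _ _ _ _ hd hmin').
Qed.

Lemma depth_par (k n : nat) (Rt : {set word k n}) par U :
  spanning_tree Rt par -> U \in cycles k n -> U != Rt ->
  depth Rt par U = (depth Rt par (par U)).+1.
Proof.
move=> st hU hUR.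
have hP : par U \in cycles k n by case: st => _ [H2 _]; case: (H2 U hU hUR).
case: (@depth_min _ _ _ _ _ st hP) => hd hmin.
rewrite /depth; apply: (@findE _ _ _ _ (depth Rt par (par U)).+1).
- by rewrite iterSr.
- case=> [|m']; first by move=> /= e; rewrite e eqxx in hUR.
  rewrite iterSr => /hmin; by [].
Qed.

Theorem lemma9 (k n : nat) (hk : (1 < k)%N) (hn : (0 < n)%N)
    (Rt : {set word k n}) (par : {set word k n} -> {set word k n})
    (rep : {set word k n} -> word k n) :
  spanning_tree Rt par -> valid_reps Rt par rep ->
  ~ (exists s : word k n,
       [/\ icr 0 s \in Reps Rt rep, icr 1 s \in Reps Rt rep & icr 0 s != icr 2 s]).
Proof.
move=> st vr [s [/imsetP [U hU e0] /imsetP [V hV e1] hne]].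
move: hU hV; rewrite !inE => /andP [hUR hU] /andP [hVR hV].
case: (vr U hU hUR) => _ hpU lastU.
case: (vr V hV hVR) => hVin _ lastV.
have : finv (icr 0) (rep U) = s by rewrite -e0 finv_f //; apply: icr_inj.
move=> fs; rewrite fs in hpU.
have hP : par U \in cycles k n by case: st => _ [H2 _]; case: (H2 U hU hUR).
have cyc : forall A t, A \in cycles k n -> t \in A -> A = cycle_of t.
  move=> A t /imsetP [a _ ->]; exact: cycle_ofE.
have eV : V = par U.
  have t1V : icr 1 s \in V by rewrite e1.
  rewrite (cyc _ _ hV t1V) (cyc _ _ hP hpU); apply: esym; apply: cycle_ofE.
  by rewrite inE fconnect1.
have hdU := @depth_par _ _ _ _ _ st hU hUR.
rewrite -eV in hdU.
have hl : (n.-1 < n)%N by rewrite prednK.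
have hl' : (Ordinal hl).+1 = n by rewrite /= prednK.
have a0 := lastU _ hl'; have a1 := lastV _ hl'.
rewrite -e0 icr_last // in a0; rewrite -e1 icr_last // in a1.
rewrite hdU mulrSr -a1 addr0 in a0.
have h2 : (2 : 'Z_k) = 0.
  have : s (insubd (Ordinal hl) 0%N) + (1 + 1) = s (insubd (Ordinal hl) 0%N) + 0.
    by rewrite addr0 addrA -a0.
  move/addrI => h; by rewrite -h.
by move: hne; rewrite h2 eqxx.
Qed.
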